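(* Consider ASAGA with step size $\gamma>0$ (described in the context). For all $t\ge0$, $$a_{t+1}\le\Big(1-\frac{\gamma\mu}{2}\Big)a_t+\gamma^2C_1\,\mathbb{E}\|g_t\|^2+\gamma^2C_2\sum_{u=(t-\tau)_+}^{t-1}\mathbb{E}\|g_u\|^2-2\gamma e_t,$$ where $C_1:=1+\sqrt\Delta\,\tau$, $C_2:=\sqrt\Delta+\gamma\mu C_1$, $a_t:=\mathbb{E}\|x_t-x^*\|^2$ and $e_t:=\mathbb{E}f(\hat x_t)-f(x^* )$.
   Context: Problem: $f(x)=\frac1n\sum_{i=1}^n f_i(x)$ on $\mathbb{R}^d$, each $f_i$ convex, differentiable with $L$-Lipschitz gradient $f_i'$; $f$ is $\mu$-strongly convex with minimizer $x^*$. $S_i$ is the support of $f_i'$. $p_v:=|\{i:v\in S_i\}|/n$; $D$ diagonal with entries $1/p_v$ (for $p_v>0$); $D_i:=P_{S_i}D$ with $P_{S_i}$ the coordinate projection onto $S_i$. $\Delta:=\frac1n\max_v|\{i:v\in S_i\}|$. ASAGA: shared memory holds $x$ (initially $x_0$) and $\alpha_1,\dots,\alpha_n$ (initially arbitrary fixed $\alpha_i^0$). Cores concurrently and without locks repeat: (1) read $x$ and all $\alpha_j$ into local copies $\hat x,\hat\alpha_j$, possibly inconsistently, in a manner not depending on the next sample; (2) sample $i$ uniformly from $\{1,\dots,n\}$ independently; (3) compute $\delta=-\gamma(f_i'(\hat x)-\hat\alpha_i+D_i\frac1n\sum_k\hat\alpha_k)$; (4) for each $v\in S_i$ atomically add $[\delta]_v$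 to $[x]_v$ and set $[\alpha_i]_v\leftarrow[f_i'(\hat x)]_v$. Iterations are labeled $t=0,1,\dots$ in order of completion of their read step; $\hat x_t,\hat\alpha^t,i_t$ are the reads and sample of iteration $t$; $g_t:=f'_{i_t}(\hat x_t)-\hat\alpha^t_{i_t}+D_{i_t}(\frac1n\sum_k\hat\alpha^t_k)$. Then $[\hat x_t]_v=[x_0]_v-\gamma\sum[g_u]_v$ over those $u<t$ whose write to coordinate $v$ was completed before iteration $t$ read it, and $i_r$ is independent of $\hat x_t$ for $r\ge t$. Bounded overlap: every write of iteration $t$ is completed before iteration $t+\tau+1$ starts reading. The virtual iterate is defined by $x_{t+1}:=x_t-\gamma g_t$ (starting at $x_0$). $(s)_+:=\max(s,0)$; $\mathbb{E}$ is expectation over all randomness. *)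

(* Defs.v *)
From HB Require Import structures.
From mathcomp Require Import all_boot all_order all_algebra.
From mathcomp Require Import all_classical all_reals all_analysis.
Set Implicit Arguments. Unset Strict Implicit. Unset Printing Implicit Defensive.
Import Order.TTheory GRing.Theory Num.Theory.
Import numFieldNormedType.Exports.
Local Open Scope ring_scope.

Section ASAGA.
Variables (R : realType) (d n : nat).
Local Notation vec := 'rV[R]_d.

Definition sqnorm (x : vec) : R := \sum_(v < d) x 0 v ^+ 2.
Definition enorm (x : vec) : R := Num.sqrt (sqnorm x).
Definition dotv (x y : vec) : R := \sum_(v < d) x 0 v * y 0 v.

Definition convex_fun (F : vec -> R) : Prop :=
  forall (x y : vec) (l : R), 0 <= l <= 1 ->
    F (l *: x + (1 - l) *: y) <= l * F x + (1 - l) * F y.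

Definition strongly_convex (mu : R) (F : vec -> R) : Prop :=
  forall (x y : vec) (l : R), 0 <= l <= 1 ->
    F (l *: x + (1 - l) *: y) <=
      l * F x + (1 - l) * F y - mu / 2 * l * (1 - l) * sqnorm (x - y).

Definition is_gradient (F : vec -> R) (Fp : vec -> vec) : Prop :=
  forall x : vec, differentiable F x /\ forall h : vec, 'd F x h = dotv (Fp x) h.

Definition lipschitz_grad (L : R) (Fp : vec -> vec) : Prop :=
  forall x y : vec, enorm (Fp x - Fp y) <= L * enorm (x - y).

Definition supp (fp : 'I_n -> vec -> vec) (i : 'I_n) : {set 'I_d} :=
  [set v | `[< exists x : vec, fp i x 0 v != 0 >]].

Definition cnt fp (v : 'I_d) : nat := #|[set i | v \in supp fp i]|.
Definition pv fp (v : 'I_d) : R := (cnt fp v)%:R / n%:R.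

(* D_i a = P_{S_i} D a, D = diag(1/p_v) (for p_v > 0) *)
Definition Dproj fp (i : 'I_n) (a : vec) : vec :=
  \row_v (if (v \in supp fp i) && (0 < cnt fp v)%N then a 0 v / pv fp v else 0).

Definition Delta fp : R := (\max_(v < d) cnt fp v)%:R / n%:R.

(* A sample spath is the sequence (i_0, i_1, ...) of sampled indices. *)
Definition spath := nat -> 'I_n.

Definition ext (Hn : (0 < n)%N) (N : nat) (s : {ffun 'I_N -> 'I_n}) : spath :=
  fun k => match insub k with Some k' => s k' | None => Ordinal Hn end.

(* Expectation, over i.i.d. uniform i_0..i_{N-1}, of a quantity that
   depends only on the first N samples. *)
Definition Exp (Hn : (0 < n)%N) (N : nat) (X : spath -> R) : R :=
  (\sum_(s : {ffun 'I_N -> 'I_n}) X (ext Hn s)) / (n%:R ^+ N).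

Definition prefix_eq (t : nat) (w w' : spath) : Prop :=
  forall u, (u < t)%N -> w u = w' u.

(* ---------- the ASAGA process ----------
   xhat t w  : the (possibly inconsistent) read of x by iteration t
   W t v w u : the write of iteration u to coordinate v of x was completed
               before iteration t read coordinate v
   src t j v w : which write to [alpha_j]_v the read of iteration t sees
               (None = the initial value alpha0) *)
Variables (fp : 'I_n -> vec -> vec) (gamma : R) (x0 : vec) (alpha0 : 'I_n -> vec)
  (xhat : nat -> spath -> vec) (W : nat -> 'I_d -> spath -> nat -> bool)
  (src : nat -> 'I_n -> 'I_d -> spath -> option nat).

Definition alphahat (t : nat) (j : 'I_n) (w : spath) : vec :=
  \row_v match src t j v w with
         | None => alpha0 j 0 v
         | Some u => fp j (xhat u w) 0 v
         end.

Definition gt (t : nat) (w : spath) : vec :=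
  fp (w t) (xhat t w) - alphahat t (w t) w
  + Dproj fp (w t) (n%:R^-1 *: \sum_(k < n) alphahat t k w).

Definition xvirt (t : nat) (w : spath) : vec :=
  x0 - gamma *: \sum_(u < t) gt u w.

Definition asaga_process (tau : nat) : Prop :=
      (forall t v w, xhat t w 0 v =
          x0 0 v - gamma * \sum_(u < t | W t v w u) gt u w 0 v) /\
      (forall t v w u, W t v w u -> (u < t)%N /\ v \in supp fp (w u)) /\
      (* bounded overlap: writes of iteration u are done before u+tau+1 reads *)
      (forall t v w u, (u + tau < t)%N -> v \in supp fp (w u) -> W t v w u) /\
      (forall t j v w u, src t j v w = Some u ->
          [/\ (u < t)%N, w u = j & v \in supp fp j]) /\
      (forall t j v w u, (u + tau < t)%N -> w u = j -> v \in supp fp j ->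
          src t j v w != None) /\
      (* the reads of iteration t do not depend on i_t, i_{t+1}, ... *)
      (forall t w w', prefix_eq t w w' ->
          (forall v, W t v w =1 W t v w') /\ (forall j v, src t j v w = src t j v w')).

End ASAGA.

(* Main.v *)
Require Import Defs.
From HB Require Import structures.
From mathcomp Require Import all_boot all_order all_algebra all_fingroup.
From mathcomp Require Import all_classical all_reals all_analysis.
From mathcomp Require Import ring lra.
Import Order.TTheory GRing.Theory Num.Theory.
Import numFieldNormedType.Exports.
Set Implicit Arguments. Unset Strict Implicit. Unset Printing Implicit Defensive.
Local Open Scope ring_scope.

Definition upd (N n : nat) (s : {ffun 'I_N -> 'I_n}) (k : 'I_N) (i : 'I_n) :
  {ffun 'I_N -> 'I_n} := [ffun m => if m == k then i else s m].

Lemma sum_upd (R : realType) (N n : nat) (h : {ffun 'I_N -> 'I_n} -> R) (k : 'I_N) :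
  \sum_s \sum_(i < n) h (upd s k i) = n%:R * \sum_s h s.
Proof.
rewrite exchange_big /=.
transitivity (\sum_(i < n) n%:R * \sum_(s : {ffun 'I_N -> 'I_n} | s k == i) h s).
  apply: eq_bigr => i _.
  rewrite (partition_big (fun s : {ffun 'I_N -> 'I_n} => s k) predT) //=.
  transitivity (\sum_(j < n) \sum_(s : {ffun 'I_N -> 'I_n} | s k == i) h s).
    apply: eq_bigr => j _.
    pose sg := fun s : {ffun 'I_N -> 'I_n} => upd s k (tperm i j (s k)).
    have sgK : involutive sg.
      move=> s; apply/ffunP => m; rewrite /sg /upd !ffunE eqxx.
      by case: eqP => [->|//]; rewrite tpermK.
    rewrite [RHS](reindex_inj (inv_inj sgK)) /=.
    apply: eq_big => s.
      rewrite /sg /upd ffunE eqxx.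
      by rewrite -[X in tperm _ _ _ == X](tpermR i j) (can_eq (tpermK i j)).
    move=> /eqP sk; congr h; apply/ffunP => m; rewrite /sg /upd !ffunE.
    by rewrite sk tpermR.
  by rewrite sumr_const card_ord mulr_natl.
rewrite -mulr_sumr; congr (_ * _).
by rewrite [RHS](partition_big (fun s : {ffun 'I_N -> 'I_n} => s k) predT).
Qed.


Lemma Exp_le (R : realType) n (Hn : (0 < n)%N) N (X Y : spath n -> R) :
  (forall w, X w <= Y w) -> Exp Hn N X <= Exp Hn N Y.
Proof.
move=> h; rewrite /Exp ler_pM2r ?invr_gt0 ?exprn_gt0 ?ltr0n //.
by apply: ler_sum => s _.
Qed.

Lemma ExpD (R : realType) n (Hn : (0 < n)%N) N (X Y : spath n -> R) :
  Exp Hn N (fun w => X w + Y w) = Exp Hn N X + Exp Hn N Y.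
Proof. by rewrite /Exp big_split /= mulrDl. Qed.

Lemma ExpZ (R : realType) n (Hn : (0 < n)%N) N (c : R) (X : spath n -> R) :
  Exp Hn N (fun w => c * X w) = c * Exp Hn N X.
Proof. by rewrite /Exp -mulr_sumr mulrA. Qed.

Lemma ExpN (R : realType) n (Hn : (0 < n)%N) N (X : spath n -> R) :
  Exp Hn N (fun w => - X w) = - Exp Hn N X.
Proof. by rewrite /Exp sumrN mulNr. Qed.

Lemma ExpB (R : realType) n (Hn : (0 < n)%N) N (X Y : spath n -> R) :
  Exp Hn N (fun w => X w - Y w) = Exp Hn N X - Exp Hn N Y.
Proof. by rewrite ExpD ExpN. Qed.

Lemma Exp_cst (R : realType) n (Hn : (0 < n)%N) N (c : R) :
  Exp Hn N (fun _ => c) = c.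
Proof.
rewrite /Exp sumr_const card_ffun !card_ord -[c *+ _]mulr_natr natrX mulfK //.
by rewrite expf_neq0 // pnatr_eq0 -lt0n.
Qed.

Lemma Exp_sum (R : realType) n (Hn : (0 < n)%N) N (I : Type) (r : seq I) (P : pred I)
  (X : I -> spath n -> R) :
  Exp Hn N (fun w => \sum_(i <- r | P i) X i w) = \sum_(i <- r | P i) Exp Hn N (X i).
Proof. by rewrite /Exp exchange_big /= mulr_suml. Qed.

Lemma Exp_ext (R : realType) n (Hn : (0 < n)%N) N (X Y : spath n -> R) :
  (forall w, X w = Y w) -> Exp Hn N X = Exp Hn N Y.
Proof. by move=> h; rewrite /Exp; congr (_ / _); apply: eq_bigr. Qed.

Lemma Exp_cond (R : realType) n (Hn : (0 < n)%N) N k (hk : (k < N)%N)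
  (Z : spath n -> 'I_n -> R) :
  (forall w w', prefix_eq k w w' -> forall i, Z w i = Z w' i) ->
  Exp Hn N (fun w => Z w (w k)) = Exp Hn N (fun w => n%:R^-1 * \sum_(i < n) Z w i).
Proof.
move=> hZ; rewrite /Exp; congr (_ / _).
pose k' := Ordinal hk.
have extk : forall s, ext Hn s k = s k'.
  move=> s; rewrite /ext; case: insubP => [u _ eu|]; last by rewrite hk.
  by congr (s _); apply: val_inj; rewrite /= eu.
have extu : forall s i u, (u < k)%N -> ext Hn (upd s k' i) u = ext Hn s u.
  move=> s i u hu; rewrite /ext; case: insubP => // u' _ eu.
  rewrite /upd ffunE; case: eqP => // e.
  by move: hu; rewrite -eu e /= ltnn.
have n0 : n%:R != 0 :> R by rewrite pnatr_eq0 -lt0n.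
transitivity (n%:R^-1 * \sum_s \sum_(i < n)
   (fun s => Z (ext Hn s) (s k')) (upd s k' i)).
  have := sum_upd (fun s => Z (ext Hn s) (s k')) k'; rewrite /= => ->.
  by rewrite mulKf //; apply: eq_bigr => s _; rewrite extk.
rewrite mulr_sumr; apply: eq_bigr => s _; congr (_ * _); apply: eq_bigr => i _.
rewrite /= /upd ffunE eqxx; apply: hZ => u hu; exact: extu.
Qed.

Lemma prefix_dep (R : realType) (d n : nat) (fp : 'I_n -> 'rV[R]_d -> 'rV[R]_d)
  (gamma : R) (x0 : 'rV[R]_d) (alpha0 : 'I_n -> 'rV[R]_d)
  (xhat : nat -> spath n -> 'rV[R]_d) (W : nat -> 'I_d -> spath n -> nat -> bool)
  (src : nat -> 'I_n -> 'I_d -> spath n -> option nat) (tau : nat) :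
  asaga_process fp gamma x0 alpha0 xhat W src tau ->
  forall t w w', prefix_eq t w w' -> xhat t w = xhat t w' /\
    (forall j, alphahat fp alpha0 xhat src t j w = alphahat fp alpha0 xhat src t j w').
Proof.
case=> hx [hW [hov [hsrc [hsov hpre]]]].
elim/ltn_ind => t IH w w' hp.
have [hWe hse] := hpre _ _ _ hp.
have IHp : forall u, (u < t)%N -> prefix_eq u w w'.
  by move=> u hu m hm; apply: hp; exact: ltn_trans hm hu.
have ha : forall j, alphahat fp alpha0 xhat src t j w = alphahat fp alpha0 xhat src t j w'.
  move=> j; apply/matrixP => i v; rewrite !mxE -hse.
  case e: (src t j v w) => [u|] //.
  have [hu _ _] := hsrc _ _ _ _ _ e.
  by have [-> _] := IH u hu _ _ (IHp u hu).
split => //.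
apply/matrixP => i v; rewrite (ord1 i) !hx.
congr (_ - _ * _); apply: eq_big => [u|u _]; first by rewrite hWe.
have hu := ltn_ord u.
have [e1 e2] := IH u hu _ _ (IHp _ hu).
rewrite /gt (hp u hu) e1 e2.
have -> : \sum_(k < n) alphahat fp alpha0 xhat src u k w =
          \sum_(k < n) alphahat fp alpha0 xhat src u k w'.
  by apply: eq_bigr => k _; rewrite e2.
by [].
Qed.

Lemma gt_prefix (R : realType) (d n : nat) (fp : 'I_n -> 'rV[R]_d -> 'rV[R]_d)
  (gamma : R) (x0 : 'rV[R]_d) (alpha0 : 'I_n -> 'rV[R]_d)
  (xhat : nat -> spath n -> 'rV[R]_d) (W : nat -> 'I_d -> spath n -> nat -> bool)
  (src : nat -> 'I_n -> 'I_d -> spath n -> option nat) (tau : nat) :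
  asaga_process fp gamma x0 alpha0 xhat W src tau ->
  forall t w w', prefix_eq t.+1 w w' -> gt fp alpha0 xhat src t w = gt fp alpha0 xhat src t w'.
Proof.
move=> hP t w w' hp.
have hp' : prefix_eq t w w' by move=> u hu; apply: hp; exact: ltnW.
have [e1 e2] := prefix_dep hP hp'.
rewrite /gt (hp t (ltnSn t)) e1 e2.
have -> : \sum_(k < n) alphahat fp alpha0 xhat src t k w =
          \sum_(k < n) alphahat fp alpha0 xhat src t k w'.
  by apply: eq_bigr => k _; rewrite e2.
by [].
Qed.

Lemma fp_supp (R : realType) (d n : nat) (fp : 'I_n -> 'rV[R]_d -> 'rV[R]_d) i x v :
  v \notin supp fp i -> fp i x 0 v = 0.
Proof.
rewrite /supp inE => h; apply/eqP; apply: contraNT h => hne.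
by apply/asboolP; exists x.
Qed.

Lemma Dproj_supp (R : realType) (d n : nat) (fp : 'I_n -> 'rV[R]_d -> 'rV[R]_d) i a v :
  v \notin supp fp i -> Dproj fp i a 0 v = 0.
Proof. by move=> h; rewrite mxE (negbTE h). Qed.

Lemma cnt0 (R : realType) (d n : nat) (fp : 'I_n -> 'rV[R]_d -> 'rV[R]_d) v i :
  cnt fp v = 0%N -> v \notin supp fp i.
Proof.
rewrite /cnt => /cards0_eq /setP /(_ i).
by rewrite !inE => ->.
Qed.

Lemma sum_supp (R : realType) (d n : nat) (fp : 'I_n -> 'rV[R]_d -> 'rV[R]_d) v (c : R) :
  \sum_(i < n) (if v \in supp fp i then c else 0) = (cnt fp v)%:R * c.
Proof.
by rewrite -big_mkcond /= sumr_const /cnt cardsE mulr_natl.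
Qed.

Lemma unbiased (R : realType) (d n : nat) (Hn : (0 < n)%N)
  (fp : 'I_n -> 'rV[R]_d -> 'rV[R]_d) (a : 'I_n -> 'rV[R]_d) :
  (forall i v, v \notin supp fp i -> a i 0 v = 0) ->
  \sum_(i < n) Dproj fp i (n%:R^-1 *: \sum_(k < n) a k) = \sum_(i < n) a i.
Proof.
move=> ha; apply/matrixP => z v; rewrite (ord1 z) !summxE.
have n0 : n%:R != 0 :> R by rewrite pnatr_eq0 -lt0n.
case: (posnP (cnt fp v)) => [c0|cpos].
  rewrite big1; last by move=> i _; rewrite mxE c0 /= andbF.
  by rewrite big1 // => i _; rewrite ha // cnt0.
transitivity (\sum_(i < n) (if v \in supp fp i then
    (n%:R^-1 *: \sum_(k < n) a k) 0 v / pv fp v else 0)).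
  by apply: eq_bigr => i _; rewrite mxE cpos andbT.
rewrite sum_supp mxE summxE /pv.
have c0 : (cnt fp v)%:R != 0 :> R by rewrite pnatr_eq0 -lt0n.
by field; apply/andP.
Qed.

Lemma delta_bound (R : realType) (d n : nat) (Hn : (0 < n)%N)
  (fp : 'I_n -> 'rV[R]_d -> 'rV[R]_d) (y : 'rV[R]_d) :
  n%:R^-1 * \sum_(i < n) \sum_(v < d) (if v \in supp fp i then y 0 v ^+ 2 else 0)
  <= Delta fp * sqnorm y.
Proof.
rewrite exchange_big /sqnorm !mulr_sumr; apply: ler_sum => v _.
rewrite sum_supp mulrA ler_wpM2r ?sqr_ge0 // /Delta mulrC ler_wpM2r ?invr_ge0 ?ler0n //.
by rewrite ler_nat; apply: (@leq_bigmax _ (fun v => cnt fp v) v).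
Qed.

Lemma alpha_supp (R : realType) (d n : nat) (fp : 'I_n -> 'rV[R]_d -> 'rV[R]_d)
  (gamma : R) (x0 : 'rV[R]_d) (alpha0 : 'I_n -> 'rV[R]_d)
  (xhat : nat -> spath n -> 'rV[R]_d) (W : nat -> 'I_d -> spath n -> nat -> bool)
  (src : nat -> 'I_n -> 'I_d -> spath n -> option nat) (tau : nat) :
  asaga_process fp gamma x0 alpha0 xhat W src tau ->
  (forall i v, v \notin supp fp i -> alpha0 i 0 v = 0) ->
  forall t j w v, v \notin supp fp j -> alphahat fp alpha0 xhat src t j w 0 v = 0.
Proof.
case=> _ [_ [_ [hsrc _]]] h0 t j w v hv; rewrite mxE.
case e: (src t j v w) => [u|]; last exact: h0.
by have [_ _ hv'] := hsrc _ _ _ _ _ e; rewrite hv' in hv.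
Qed.

Lemma gt_supp (R : realType) (d n : nat) (fp : 'I_n -> 'rV[R]_d -> 'rV[R]_d)
  (gamma : R) (x0 : 'rV[R]_d) (alpha0 : 'I_n -> 'rV[R]_d)
  (xhat : nat -> spath n -> 'rV[R]_d) (W : nat -> 'I_d -> spath n -> nat -> bool)
  (src : nat -> 'I_n -> 'I_d -> spath n -> option nat) (tau : nat) :
  asaga_process fp gamma x0 alpha0 xhat W src tau ->
  (forall i v, v \notin supp fp i -> alpha0 i 0 v = 0) ->
  forall t w v, v \notin supp fp (w t) -> gt fp alpha0 xhat src t w 0 v = 0.
Proof.
move=> hP h0 t w v hv.
have h1 := fp_supp (xhat t w) hv.
have h2 := alpha_supp hP h0 t w hv.
have h3 := Dproj_supp (n%:R^-1 *: \sum_(k < n) alphahat fp alpha0 xhat src t k w) hv.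
move: h1 h2 h3; rewrite /gt !mxE => -> -> ->.
by rewrite subr0 addr0.
Qed.

Lemma amgm (R : realType) (sd c a b : R) : 0 < sd -> 0 <= c <= 1 ->
  2 * (c * a) * b <= sd * b ^+ 2 + sd^-1 * a ^+ 2.
Proof.
move=> sd0 /andP [c0 c1].
have hz : sd * sd^-1 = 1 by rewrite mulfV ?gt_eqF.
have z0 : 0 < sd^-1 by rewrite invr_gt0.
have h1 : 0 <= sd^-1 * (sd * b - c * a) ^+ 2 by rewrite mulr_ge0 ?sqr_ge0 ?ltW.
have e : sd^-1 * (sd * b - c * a) ^+ 2 =
   sd * b ^+ 2 * (sd * sd^-1) - 2 * c * a * b * (sd * sd^-1) + sd^-1 * (c * a) ^+ 2.
  by ring.
rewrite e hz !mulr1 in h1.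
have h2 : sd^-1 * (c * a) ^+ 2 <= sd^-1 * a ^+ 2.
  apply: ler_wpM2l; first exact: ltW.
  rewrite exprMn -[X in _ <= X]mul1r ler_wpM2r ?sqr_ge0 //.
  by rewrite expr2 -[1]mulr1 ler_pM.
lra.
Qed.

Lemma Delta_ge0 (R : realType) (d n : nat) (fp : 'I_n -> 'rV[R]_d -> 'rV[R]_d) :
  0 <= Delta fp.
Proof. by rewrite /Delta divr_ge0 ?ler0n. Qed.

Lemma Delta_gt0 (R : realType) (d n : nat) (Hn : (0 < n)%N)
  (fp : 'I_n -> 'rV[R]_d -> 'rV[R]_d) i v :
  v \in supp fp i -> 0 < Delta fp.
Proof.
move=> hv; rewrite /Delta divr_gt0 ?ltr0n //.
apply: (@leq_trans (cnt fp v)); last exact: (@leq_bigmax _ (fun v => cnt fp v) v).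
by rewrite /cnt card_gt0; apply/set0Pn; exists i; rewrite inE.
Qed.

Lemma invsq (R : realType) (x : R) : x^-1 * x ^+ 2 = x.
Proof.
rewrite expr2 mulrA; case: (eqVneq x 0) => [->|nz]; first by rewrite mulr0.
by rewrite mulVf // mul1r.
Qed.

Lemma cross_pt (R : realType) (d n : nat) (Hn : (0 < n)%N)
  (fp : 'I_n -> 'rV[R]_d -> 'rV[R]_d) (i : 'I_n) (v : 'I_d) (c a b : R) :
  0 <= c <= 1 -> (v \notin supp fp i -> b = 0) ->
  2 * (c * a) * b <= Num.sqrt (Delta fp) * b ^+ 2 +
     (Num.sqrt (Delta fp))^-1 * (if v \in supp fp i then a ^+ 2 else 0).
Proof.
move=> hc hb; case: ifP => hv.
  by apply: amgm => //; rewrite sqrtr_gt0; exact: Delta_gt0 hv.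
by rewrite hb ?hv // expr2 !mulr0 addr0.
Qed.

Lemma cross_exp (R : realType) (d n : nat) (Hn : (0 < n)%N) (fp : 'I_n -> 'rV[R]_d -> 'rV[R]_d)
  (gamma : R) (x0 : 'rV[R]_d) (alpha0 : 'I_n -> 'rV[R]_d)
  (xhat : nat -> spath n -> 'rV[R]_d) (W : nat -> 'I_d -> spath n -> nat -> bool)
  (src : nat -> 'I_n -> 'I_d -> spath n -> option nat) (tau : nat) :
  asaga_process fp gamma x0 alpha0 xhat W src tau ->
  (forall i v, v \notin supp fp i -> alpha0 i 0 v = 0) ->
  forall (m : nat -> 'I_d -> spath n -> R) (b : 'I_d -> spath n -> R) (N k lo : nat),
  (forall u v w, 0 <= m u v w <= 1) -> (forall v w, 0 <= b v w <= 1) -> (k < N)%N ->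
  Exp Hn N (fun w => \sum_(v < d) 2 * (\sum_(lo <= u < k) m u v w * gt fp alpha0 xhat src u w 0 v)
                                      * (b v w * gt fp alpha0 xhat src k w 0 v))
  <= Num.sqrt (Delta fp) * (k - lo)%:R * Exp Hn N (fun w => sqnorm (gt fp alpha0 xhat src k w))
     + Num.sqrt (Delta fp) * \sum_(lo <= u < k) Exp Hn N (fun w => sqnorm (gt fp alpha0 xhat src u w)).
Proof.
move=> hP h0 m b N k lo hm hb hk.
set g := gt fp alpha0 xhat src; set sd := Num.sqrt (Delta fp).
pose Y := fun w u => \sum_(v < d) (if v \in supp fp (w k) then g u w 0 v ^+ 2 else 0).
apply: (@le_trans _ _ (Exp Hn N (fun w => \sum_(lo <= u < k)
           (sd * sqnorm (g k w) + sd^-1 * Y w u)))).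
  apply: Exp_le => w.
  have -> : \sum_(v < d) 2 * (\sum_(lo <= u < k) m u v w * g u w 0 v) * (b v w * g k w 0 v)
     = \sum_(lo <= u < k) \sum_(v < d) 2 * ((m u v w * b v w) * g u w 0 v) * g k w 0 v.
    rewrite [RHS]exchange_big /=; apply: eq_bigr => v _.
    rewrite mulr_sumr mulr_suml; apply: eq_bigr => u _; ring.
  apply: ler_sum => u _; rewrite /sqnorm /Y !mulr_sumr -big_split /=.
  apply: ler_sum => v _; apply: (cross_pt Hn (i := w k)).
    have /andP [m0 m1] := hm u v w; have /andP [b0 b1] := hb v w.
    by rewrite mulr_ge0 //= mulr_ile1.
  exact: (gt_supp hP h0).
rewrite Exp_sum.
under eq_bigr => u _ do rewrite ExpD !ExpZ.
rewrite big_split /= sumr_const_nat; apply: lerD.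
  by rewrite -[sd * _ *+ _]mulr_natl mulrCA mulrA.
rewrite mulr_sumr; apply: ler_sum_nat => u /andP [_ hu].
have -> : Exp Hn N (fun w => Y w u) = Exp Hn N (fun w => n%:R^-1 * \sum_(i < n)
     \sum_(v < d) (if v \in supp fp i then g u w 0 v ^+ 2 else 0)).
  pose Z := fun w (i : 'I_n) => \sum_(v < d)
      (if v \in supp fp i then g u w 0 v ^+ 2 else 0).
  have hZ : forall w w', prefix_eq k w w' -> forall i, Z w i = Z w' i.
    move=> w w' hp i.
    have hp' : prefix_eq u.+1 w w' by move=> z hz; apply: hp; exact: leq_trans hz hu.
    by rewrite /Z /g (gt_prefix hP hp').
  exact: (Exp_cond Hn hk hZ).
apply: (@le_trans _ _ (sd^-1 * Exp Hn N (fun w => Delta fp * sqnorm (g u w)))).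
  apply: ler_wpM2l; first by rewrite invr_ge0 sqrtr_ge0.
  by apply: Exp_le => w; apply: delta_bound.
rewrite ExpZ mulrA -{1}(sqr_sqrtr (Delta_ge0 fp)) invsq.
by [].
Qed.

Lemma sqnorm_ge0 (R : realType) (d : nat) (x : 'rV[R]_d) : 0 <= sqnorm x.
Proof. by apply: sumr_ge0 => v _; rewrite sqr_ge0. Qed.

Lemma Exp_ge0 (R : realType) n (Hn : (0 < n)%N) N (X : spath n -> R) :
  (forall w, 0 <= X w) -> 0 <= Exp Hn N X.
Proof. by move=> h; rewrite -(Exp_cst Hn N 0); apply: Exp_le. Qed.

Lemma Q_exp (R : realType) (d n : nat) (Hn : (0 < n)%N) (fp : 'I_n -> 'rV[R]_d -> 'rV[R]_d)
  (gamma : R) (x0 : 'rV[R]_d) (alpha0 : 'I_n -> 'rV[R]_d)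
  (xhat : nat -> spath n -> 'rV[R]_d) (W : nat -> 'I_d -> spath n -> nat -> bool)
  (src : nat -> 'I_n -> 'I_d -> spath n -> option nat) (tau : nat) :
  asaga_process fp gamma x0 alpha0 xhat W src tau ->
  (forall i v, v \notin supp fp i -> alpha0 i 0 v = 0) ->
  forall (m : nat -> 'I_d -> spath n -> R) (N lo : nat),
  (forall u v w, 0 <= m u v w <= 1) ->
  forall j, (lo + j <= N)%N ->
  Exp Hn N (fun w => \sum_(v < d)
       (\sum_(lo <= u < lo + j) m u v w * gt fp alpha0 xhat src u w 0 v) ^+ 2)
  <= (1 + Num.sqrt (Delta fp) * j%:R) *
     \sum_(lo <= u < lo + j) Exp Hn N (fun w => sqnorm (gt fp alpha0 xhat src u w)).
Proof.
move=> hP h0 m N lo hm.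
set g := gt fp alpha0 xhat src; set sd := Num.sqrt (Delta fp).
have sd0 : 0 <= sd by rewrite sqrtr_ge0.
elim=> [|j IH] hj.
  rewrite addn0 big_geq // mulr0.
  rewrite (Exp_ext _ _ (Y := fun _ => 0)) ?Exp_cst //.
  by move=> w; rewrite big1 // => v _; rewrite big_geq // expr2 mulr0.
have hk : (lo + j < N)%N by rewrite -addnS.
rewrite addnS big_nat_recr ?leq_addr //=.
set G := Exp Hn N (fun w => sqnorm (g (lo + j)%N w)).
set S := \sum_(lo <= u < lo + j) Exp Hn N (fun w => sqnorm (g u w)).
have G0 : 0 <= G by apply: Exp_ge0 => w; exact: sqnorm_ge0.
have S0 : 0 <= S by apply: sumr_ge0 => u _; apply: Exp_ge0 => w; exact: sqnorm_ge0.
have IH' := IH (ltnW hk).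
have hc := cross_exp Hn hP h0 lo hm (fun v w => hm (lo + j)%N v w) hk.
rewrite addKn -/g -/sd -/G -/S in hc.
apply: (@le_trans _ _ (Exp Hn N (fun w => \sum_(v < d)
       (\sum_(lo <= u < lo + j) m u v w * g u w 0 v) ^+ 2) +
   Exp Hn N (fun w => \sum_(v < d) 2 * (\sum_(lo <= u < lo + j) m u v w * g u w 0 v)
         * (m (lo + j)%N v w * g (lo + j)%N w 0 v)) + G)).
  rewrite -!ExpD; apply: Exp_le => w.
  rewrite /sqnorm -!big_split /=; apply: ler_sum => v _.
  rewrite big_nat_recr ?leq_addr //=.
  set c := \sum_(lo <= i < lo + j) _.
  set a := g (lo + j)%N w 0 v; set mm := m (lo + j)%N v w.
  have /andP [m0 m1] := hm (lo + j)%N v w.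
  have : (mm * a) ^+ 2 <= a ^+ 2.
    rewrite exprMn -[X in _ <= X]mul1r ler_wpM2r ?sqr_ge0 //.
    by rewrite expr2 -[1]mulr1 ler_pM.
  have -> : (c + mm * a) ^+ 2 = c ^+ 2 + 2 * c * (mm * a) + (mm * a) ^+ 2 by ring.
  lra.
have e1 : (1 + sd * j.+1%:R) * (S + G) = (1 + sd * j%:R) * S + sd * S
   + (1 + sd * j%:R + sd) * G by rewrite -addn1 natrD; ring.
rewrite e1.
have : sd * j%:R * G <= sd * j%:R * G + sd * G by rewrite lerDl mulr_ge0.
move: IH' hc; rewrite -/g -/sd -/S => IH' hc.
nra.
Qed.

Local Open Scope classical_set_scope.

Lemma dir_der (R : realType) (d : nat) (f : 'rV[R]_d -> R) (fp : 'rV[R]_d -> 'rV[R]_d) x h :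
  is_gradient f fp -> is_derive x h f (dotv (fp x) h).
Proof.
move=> /(_ x) [df dfe].
rewrite -dfe -deriveE //.
apply: derivableP; exact: diff_derivable.
Qed.

Lemma der_quot (R : realType) (d : nat) (F : 'rV[R]_d -> R) x h D :
  is_derive x h F D ->
  (l^-1 *: (F (l *: h + x) - F x)) @[l --> (0:R)^'] --> D.
Proof.
case=> ex <-.
exact: ex.
Qed.

Lemma dotvC (R : realType) (d : nat) (a b : 'rV[R]_d) : dotv a b = dotv b a.
Proof. by apply: eq_bigr => v _; rewrite mulrC. Qed.

Lemma dotv_suml (R : realType) (d n : nat) (a : 'I_n -> 'rV[R]_d) b :
  dotv (\sum_(i < n) a i) b = \sum_(i < n) dotv (a i) b.
Proof.
rewrite /dotv exchange_big /=; apply: eq_bigr => v _.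
by rewrite summxE mulr_suml.
Qed.

Lemma dotvZl (R : realType) (d : nat) (k : R) (a b : 'rV[R]_d) :
  dotv (k *: a) b = k * dotv a b.
Proof. by rewrite /dotv mulr_sumr; apply: eq_bigr => v _; rewrite mxE mulrA. Qed.

Lemma dotvNl (R : realType) (d : nat) (a b : 'rV[R]_d) :
  dotv (- a) b = - dotv a b.
Proof. by rewrite -scaleN1r dotvZl mulN1r. Qed.

Lemma sqnormN (R : realType) (d : nat) (a : 'rV[R]_d) : sqnorm (- a) = sqnorm a.
Proof. by apply: eq_bigr => v _; rewrite mxE sqrrN. Qed.

Lemma first_order (R : realType) (d n : nat) (f : 'I_n -> 'rV[R]_d -> R)
  (fp : 'I_n -> 'rV[R]_d -> 'rV[R]_d) (mu : R) (x y : 'rV[R]_d) :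
  let F := fun x => n%:R^-1 * \sum_(i < n) f i x in
  (forall i, is_gradient (f i) (fp i)) -> strongly_convex mu F ->
  F x - F y + mu / 2 * sqnorm (x - y) <= dotv (x - y) (n%:R^-1 *: \sum_(i < n) fp i x).
Proof.
move=> F hg hsc.
set h := y - x.
have hd : is_derive x h F (dotv (n%:R^-1 *: \sum_(i < n) fp i x) h).
  have -> : F = n%:R^-1 \*: \sum_(i < n) f i.
    by apply/funext => z; rewrite /F /= fct_sumE.
  rewrite dotvZl dotv_suml.
  apply: is_deriveZ; apply: is_derive_sum => i; exact: dir_der.
have hq := cvg_dnbhs_at_right (der_quot hd).
set S := sqnorm h.
set A := F y - F x - mu / 2 * S.
set D := dotv _ h in hq.
have hp : ((l^-1 *: (F (l *: h + x) - F x)) - (mu / 2 * S) * l) @[l --> (0:R)^'+] --> D - (mu / 2 * S) * 0.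
  apply: cvgB => //; apply: cvgMr; exact: cvg_at_right_filter cvg_id.
rewrite mulr0 subr0 in hp.
have DA : D <= A.
  apply: (cvgr_to_le hp); near=> l.
  have l0 : 0 < l by near: l; exact: nbhs_right_gt.
  have l1 : l <= 1 by near: l; exact: nbhs_right_le.
  have e : l *: h + x = l *: y + (1 - l) *: x.
    by apply/matrixP => i j; rewrite !mxE; ring.
  have := hsc y x l; rewrite l1 ltW //= => /(_ isT).
  rewrite -e -/h => hQ.
  set Q := F (l *: h + x) in hQ *.
  have : l^-1 * (Q - F x) <= l^-1 * (l * (F y - F x - mu / 2 * (1 - l) * S)).
    apply: ler_wpM2l; first by rewrite invr_ge0 ltW.
    rewrite /S; lra.
  rewrite mulKf ?gt_eqF // /A => H.
  have -> : l^-1 *: (Q - F x) = l^-1 * (Q - F x) by [].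
  lra.
have -> : x - y = - h by rewrite /h opprB.
rewrite sqnormN dotvNl (dotvC h) -/S.
move: DA; rewrite /D /A; lra.
Unshelve. all: by end_near.
Qed.

Local Close Scope classical_set_scope.

Lemma xdiff (R : realType) (d n : nat) (fp : 'I_n -> 'rV[R]_d -> 'rV[R]_d)
  (gamma : R) (x0 : 'rV[R]_d) (alpha0 : 'I_n -> 'rV[R]_d)
  (xhat : nat -> spath n -> 'rV[R]_d) (W : nat -> 'I_d -> spath n -> nat -> bool)
  (src : nat -> 'I_n -> 'I_d -> spath n -> option nat) (tau : nat) :
  asaga_process fp gamma x0 alpha0 xhat W src tau ->
  (forall i v, v \notin supp fp i -> alpha0 i 0 v = 0) ->
  forall t w v, (xvirt fp gamma x0 alpha0 xhat src t w - xhat t w) 0 v =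
    - gamma * \sum_(t - tau <= u < t) (if W t v w u then 0 else 1)
                                      * gt fp alpha0 xhat src u w 0 v.
Proof.
move=> hP h0 t w v.
have [hx [hW [hov _]]] := hP.
transitivity (- gamma * \sum_(u < t) (if W t v w u then 0 else 1)
                 * gt fp alpha0 xhat src u w 0 v).
  rewrite /xvirt !mxE hx summxE.
  have e : \sum_(u < t) gt fp alpha0 xhat src u w 0 v =
     \sum_(u < t) (if W t v w u then gt fp alpha0 xhat src u w 0 v else 0) +
     \sum_(u < t) (if W t v w u then 0 else 1) * gt fp alpha0 xhat src u w 0 v.
    rewrite -big_split; apply: eq_bigr => u _.
    by case: (W t v w u); rewrite /= ?mul0r ?mul1r ?addr0 ?add0r.
  rewrite e [X in _ - (_ - _ * X)]big_mkcond /=; ring.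
congr (_ * _); rewrite -(big_mkord xpredT (fun u => (if W t v w u then 0 else 1) * gt fp alpha0 xhat src u w 0 v)) (big_cat_nat (n := t - tau)) ?leq_subr //=.
rewrite big_nat_cond big1 ?add0r // => u /andP [/andP [_ hu] _].
have hu' : (u + tau < t)%N by rewrite addnC -ltn_subRL.
case hv: (v \in supp fp (w u)).
  by rewrite (hov _ _ _ _ hu' hv) mul0r.
by rewrite (gt_supp hP h0) ?hv // mulr0.
Qed.

Lemma dot_avg (R : realType) (d n : nat) (h : 'rV[R]_d) (a : 'I_n -> 'rV[R]_d) :
  n%:R^-1 * \sum_(i < n) dotv h (a i) = dotv h (n%:R^-1 *: \sum_(i < n) a i).
Proof.
rewrite dotvC dotvZl dotv_suml; congr (_ * _).
by apply: eq_bigr => i _; rewrite dotvC.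
Qed.

Lemma Esub (R : realType) (d : nat) (A B : 'rV[R]_d) v : (A - B) 0 v = A 0 v - B 0 v.
Proof. by rewrite !mxE. Qed.
Lemma Eadd (R : realType) (d : nat) (A B : 'rV[R]_d) v : (A + B) 0 v = A 0 v + B 0 v.
Proof. by rewrite !mxE. Qed.
Lemma Escale (R : realType) (d : nat) (k : R) (A : 'rV[R]_d) v : (k *: A) 0 v = k * A 0 v.
Proof. by rewrite !mxE. Qed.

Lemma final_arith (R : realType) (A1 A0 G S EQ ECr EF Fs gamma mu sd tau : R) :
  0 <= gamma ->
  A1 <= (1 - gamma * mu / 2) * A0 + gamma ^+ 2 * G + gamma * gamma ^+ 2 * mu * EQ
        + gamma ^+ 2 * ECr - 2 * gamma * (EF - Fs) ->
  gamma * gamma ^+ 2 * mu * EQ <= gamma * gamma ^+ 2 * mu * ((1 + sd * tau) * S) ->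
  gamma ^+ 2 * ECr <= gamma ^+ 2 * (sd * tau * G + sd * S) ->
  A1 <= (1 - gamma * mu / 2) * A0 + gamma ^+ 2 * (1 + sd * tau) * G
        + gamma ^+ 2 * (sd + gamma * mu * (1 + sd * tau)) * S - 2 * gamma * (EF - Fs).
Proof. move=> *; lra. Qed.

Unset Implicit Arguments.

Theorem lemma1 (R : realType) (d n : nat) (Hn : (0 < n)%N)
  (f : 'I_n -> 'rV[R]_d -> R) (fp : 'I_n -> 'rV[R]_d -> 'rV[R]_d)
  (L mu gamma : R) (tau : nat) (xstar x0 : 'rV[R]_d) (alpha0 : 'I_n -> 'rV[R]_d)
  (xhat : nat -> spath n -> 'rV[R]_d) (W : nat -> 'I_d -> spath n -> nat -> bool)
  (src : nat -> 'I_n -> 'I_d -> spath n -> option nat) :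
  let F := fun x => n%:R^-1 * \sum_(i < n) f i x in
  (forall i, convex_fun (f i)) ->
  (forall i, is_gradient (f i) (fp i)) ->
  (forall i, lipschitz_grad L (fp i)) ->
  0 < mu -> strongly_convex mu F ->
  (forall x, F xstar <= F x) ->
  (forall i v, v \notin supp fp i -> alpha0 i 0 v = 0) ->
  0 < gamma ->
  asaga_process fp gamma x0 alpha0 xhat W src tau ->
  let C1 := 1 + Num.sqrt (Delta fp) * tau%:R in
  let C2 := Num.sqrt (Delta fp) + gamma * mu * C1 in
  let E := Exp (R:=R) Hn in
  let g := gt fp alpha0 xhat src in
  let x := xvirt fp gamma x0 alpha0 xhat src in
  forall t : nat,
    let a := fun s => E t.+1 (fun w => sqnorm (x s w - xstar)) in
    let e := E t.+1 (fun w => F (xhat t w)) - F xstar in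
    a t.+1 <= (1 - gamma * mu / 2) * a t
              + gamma ^+ 2 * C1 * E t.+1 (fun w => sqnorm (g t w))
              + gamma ^+ 2 * C2 * \sum_(t - tau <= u < t) E t.+1 (fun w => sqnorm (g u w))
              - 2 * gamma * e.
Proof.
move=> F hconv hgrad hlip hmu hsc hmin h0 hgam hP C1 C2 E g x t; cbv zeta.
set lo := (t - tau)%N.
set sd := Num.sqrt (Delta fp).
pose m := fun u (v : 'I_d) w => (if W t v w u then 0 else 1 : R).
pose c := fun v w => \sum_(lo <= u < t) m u v w * g u w 0 v.
pose Gr := fun w => n%:R^-1 *: \sum_(i < n) fp i (xhat t w).
pose Q := fun w => \sum_(v < d) c v w ^+ 2.
pose Cr := fun w => \sum_(v < d) 2 * c v w * (1 * g t w 0 v).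
pose Dif := fun w => dotv (xhat t w - xstar) (g t w) - dotv (xhat t w - xstar) (Gr w).
have key : forall w, sqnorm (x t.+1 w - xstar) <=
   (1 - gamma * mu / 2) * sqnorm (x t w - xstar) + gamma ^+ 2 * sqnorm (g t w)
   + gamma ^+ 3 * mu * Q w + gamma ^+ 2 * Cr w
   - 2 * gamma * (F (xhat t w) - F xstar) - 2 * gamma * Dif w.
  move=> w.
  have FO : F (xhat t w) - F xstar + mu / 2 * sqnorm (xhat t w - xstar)
            <= dotv (xhat t w - xstar) (Gr w) := first_order (xhat t w) xstar hgrad hsc.
  have FO2 := ler_wpM2l (ltW (mulr_gt0 (ltr0Sn R 1) hgam)) FO.
  have ex0 : forall v, (x t w - xstar) 0 v = (xhat t w - xstar) 0 v - gamma * c v w.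
    move=> v; have hd := xdiff hP h0 t w v; rewrite !Esub -/lo in hd.
    rewrite !Esub /c /m /g; lra.
  have ex1 : forall v, (x t.+1 w - xstar) 0 v = (x t w - xstar) 0 v - gamma * g t w 0 v.
    move=> v; rewrite /x /xvirt big_ord_recr /= ?Esub ?Escale ?Eadd /g; lra.
  have hs : sqnorm (x t.+1 w - xstar) <= (1 - gamma * mu / 2) * sqnorm (x t w - xstar)
     + gamma ^+ 2 * sqnorm (g t w) + gamma ^+ 3 * mu * Q w + gamma ^+ 2 * Cr w
     + gamma * mu * sqnorm (xhat t w - xstar) - 2 * gamma * dotv (xhat t w - xstar) (g t w).
    rewrite /sqnorm /Q /Cr /dotv !mulr_sumr -!big_split -sumrB /=.
    apply: ler_sum => v _; rewrite ex1 ex0.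
    set H := (xhat t w - xstar) 0 v; set cc := c v w; set gg := g t w 0 v.
    have : 0 <= gamma * mu * (H + gamma * cc) ^+ 2 by rewrite mulr_ge0 ?sqr_ge0 // mulr_ge0 // ltW.
    lra.
  move: hs FO2; rewrite /Dif; lra.
have hE := Exp_le Hn t.+1 key.
have hm : forall u v w, 0 <= m u v w <= 1.
  by move=> u v w; rewrite /m; case: (W t v w u); rewrite /= ?lexx ?ler01.
have hb : forall (v : 'I_d) (w : spath n), 0 <= (1 : R) <= 1 by move=> *; rewrite lexx ler01.
have hlo : (lo <= t)%N by rewrite leq_subr.
have hQ : E t.+1 Q <= (1 + sd * (t - lo)%:R) *
    \sum_(lo <= u < t) E t.+1 (fun w => sqnorm (g u w)).
  have hj : (lo + (t - lo) <= t.+1)%N by rewrite subnKC.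
  have := Q_exp Hn hP h0 hm hj; rewrite subnKC //; exact.
have hC : E t.+1 Cr <= sd * (t - lo)%:R * E t.+1 (fun w => sqnorm (g t w))
    + sd * \sum_(lo <= u < t) E t.+1 (fun w => sqnorm (g u w)).
  exact: (cross_exp Hn hP h0 lo hm hb (ltnSn t)).
have hD : E t.+1 Dif = 0.
  rewrite /Dif /E ExpB.
  pose Z := fun w (i : 'I_n) => dotv (xhat t w - xstar)
     (fp i (xhat t w) - alphahat fp alpha0 xhat src t i w +
      Dproj fp i (n%:R^-1 *: \sum_(k < n) alphahat fp alpha0 xhat src t k w)).
  have hZ : forall w w', prefix_eq t w w' -> forall i, Z w i = Z w' i.
    move=> w w' hp i; have [e1 e2] := prefix_dep hP hp; rewrite /Z e1 e2.
    have -> : \sum_(k < n) alphahat fp alpha0 xhat src t k w =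
              \sum_(k < n) alphahat fp alpha0 xhat src t k w'.
      by apply: eq_bigr => k _; rewrite e2.
    by [].
  have -> : Exp Hn t.+1 (fun w => dotv (xhat t w - xstar) (g t w)) =
            Exp Hn t.+1 (fun w => Z w (w t)) by [].
  rewrite (Exp_cond Hn (ltnSn t) hZ).
  rewrite (Exp_ext Hn t.+1 (Y := fun w => dotv (xhat t w - xstar) (Gr w))) ?subrr //.
  move=> w; rewrite /Z dot_avg /Gr; congr (dotv _ (_ *: _)).
  have ha : forall i v, v \notin supp fp i -> alphahat fp alpha0 xhat src t i w 0 v = 0.
    by move=> i v hv; apply: (alpha_supp hP h0).
  by rewrite big_split /= big_split /= sumrN (unbiased Hn ha) subrK.
rewrite !ExpB !ExpD !ExpZ ExpB Exp_cst -/E hD mulr0 subr0 in hE.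
set A1 := E t.+1 (fun w => sqnorm (x t.+1 w - xstar)) in hE *.
set A0 := E t.+1 (fun w => sqnorm (x t w - xstar)) in hE *.
set G := E t.+1 (fun w => sqnorm (g t w)) in hE hC *.
set S := \sum_(lo <= u < t) E t.+1 (fun w => sqnorm (g u w)) in hQ hC *.
set EF := E t.+1 (fun w => F (xhat t w)) in hE *.
have G0 : 0 <= G by apply: Exp_ge0 => w; exact: sqnorm_ge0.
have S0 : 0 <= S by apply: sumr_ge0 => u _; apply: Exp_ge0 => w; exact: sqnorm_ge0.
have sd0 : 0 <= sd by rewrite sqrtr_ge0.
have jt : (t - lo)%:R <= tau%:R :> R by rewrite ler_nat /lo -minnE geq_minr.
have g0 : 0 <= gamma := ltW hgam.
have h1 : gamma ^+ 3 * mu * E t.+1 Q <= gamma ^+ 3 * mu * ((1 + sd * tau%:R) * S).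
  apply: ler_wpM2l; first by rewrite mulr_ge0 ?exprn_ge0 // ltW.
  apply: (le_trans hQ); apply: ler_wpM2r => //; rewrite lerD2l; exact: ler_wpM2l.
have h2 : gamma ^+ 2 * E t.+1 Cr <= gamma ^+ 2 * (sd * tau%:R * G + sd * S).
  apply: ler_wpM2l; first by rewrite exprn_ge0.
  apply: (le_trans hC); rewrite lerD2r; apply: ler_wpM2r => //; exact: ler_wpM2l.
rewrite /C1 /C2 -/sd.
have e3 : gamma ^+ 3 = gamma * gamma ^+ 2 by rewrite exprS.
move: hE h1 h2; rewrite e3 /C1 => hE h1 h2.
exact: (final_arith g0 hE h1 h2).
Qed.
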